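(* In the mechanism $\mathbb{M}_{\text{1-supply}}$ on a unit-supply two-sided market, if every seller $j\in L$ receives and accepts an offer (i.e. puts her item into the market) with probability exactly $1/2$, then $$2\,\mathrm{ALG}^S\ \ge\ \sum_{j=1}^k\mathbb{E}[w_j]\ \ge\ \mathrm{OPT}^S.$$
   Context: Unit-supply two-sided market: buyers $[n]$, sellers $[k]$, seller $j$ owns only item $j$. Buyer valuations $v_i$ are monotone normalized XOS functions on $2^{[k]}$ drawn independently from public distributions $G_i$; seller values $w_j\ge0$ drawn independently from public distributions $F_j$. For XOS $v$ and $T\subseteq[k]$, $a(v,T,\cdot)$ is a fixed additive function with $a(v,T,T)=v(T)$, $a(v,T,S)\le v(S)$. $\mathbb{A}$ maps buyer profiles $\mathbf v$ to allocations $X^{\mathbb A}(\mathbf v)$ of items to buyers. $\mathrm{SW}^B_j(\mathbf v)=a(v_i,X^{\mathbb A}_i(\mathbf v),\{j\})$ if $j\in X^{\mathbb A}_i(\mathbf v)$, else $0$. $L=\{j:\mathbb{E}[\mathrm{SW}^B_j(\mathbf v)]\ge4\mathbb{E}[w_j]\}$, $p_j=\frac12\mathbb{E}[\mathrm{SW}^B_j(\mathbf v)]$ for $j\in L$. $\mathbb{M}_{\text{1-supply}}$: for each $j\in L$, with probability $q_j=1/(2\Pr[w_j\le p_j])$ offer seller $j$ payment $p_j$; she accepts iff $w_j\le p_j$; $\Lambda_1$ = accepted items. Then buyers $i=1,\dots,n$ in turn pick a utility-maximizing bundle $B_i\subseteq\Lambda_i$ at prices $p_j$, pay $\sum_{j\in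 B_i}p_j$, and $\Lambda_{i+1}=\Lambda_i\setminus B_i$; sellers of bought items receive $p_j$; unbought items stay with their sellers. $\mathrm{ALG}^S=\mathbb{E}[\sum_j w_j\mathbb{I}(\text{item } j\text{ stays with seller }j)]$ in the mechanism's outcome. $\mathrm{OPT}^S$ is the expected sellers' part $\sum_j w_j\mathbb{I}(j\text{ unallocated to buyers})$ of the welfare of a welfare-maximizing allocation (chosen for each valuation profile). *)

(* Defs.v *)
From HB Require Import structures.
From mathcomp Require Import all_boot all_order all_algebra.
From mathcomp Require Import all_classical all_reals all_analysis.
Set Implicit Arguments. Unset Strict Implicit. Unset Printing Implicit Defensive.
Import Order.TTheory GRing.Theory Num.Theory.
Local Open Scope ring_scope.

Section Market.
Variable R : realType.

Definition valuation (k : nat) := {set 'I_k} -> R.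

Definition addfun (k : nat) (alpha : 'I_k -> R) (S : {set 'I_k}) : R :=
  \sum_(j in S) alpha j.

Definition monotone_val (k : nat) (v : valuation k) :=
  forall S T : {set 'I_k}, S \subset T -> v S <= v T.

Definition normalized_val (k : nat) (v : valuation k) := v finset.set0 = 0.

Definition XOS (k : nat) (v : valuation k) :=
  exists (m : nat) (alpha : 'I_m.+1 -> 'I_k -> R),
    (forall l j, 0 <= alpha l j) /\
    (forall l S, addfun (alpha l) S <= v S) /\
    (forall S, exists l, v S = addfun (alpha l) S).

(* allocations of items to buyers: item j goes to buyer i (Some i) or to nobody *)
Definition alloc (n k : nat) := 'I_k -> option 'I_n.

Definition bundle (n k : nat) (X : alloc n k) (i : 'I_n) : {set 'I_k} :=
  [set j | X j == Some i].

Definition SWB (n k : nat) (a : valuation k -> {set 'I_k} -> 'I_k -> R)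
  (A : ('I_n -> valuation k) -> alloc n k) (vs : 'I_n -> valuation k) (j : 'I_k) : R :=
  match A vs j with
  | Some i => addfun (a (vs i) (bundle (A vs) i)) [set j]
  | None => 0
  end.

Definition welfare (n k : nat) (vs : 'I_n -> valuation k) (ws : 'I_k -> R)
  (X : alloc n k) : R :=
  \sum_(i < n) vs i (bundle X i) + \sum_(j < k) ws j * (X j == None)%:R.

Section Prob.
Local Open Scope classical_set_scope.
Context (d : measure_display) (Omega : measurableType d) (P : probability Omega R).

(* mutual independence of a finite family of event collections:
   product rule for every choice of one event per collection
   (each collection contains setT, so this covers all subfamilies) *)
Definition mutually_independent (I : finType) (E : I -> set (set Omega)) :=
  forall Aev : I -> set Omega, (forall t, E t (Aev t)) ->
    P (\bigcap_(t in [set: I]) Aev t) = (\prod_(t : I) fine (P (Aev t)))%:E.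

Definition events_rv (X : Omega -> R) : set (set Omega) :=
  [set Aev | exists B : set R, measurable B /\ Aev = X @^-1` B].

Definition events_val (k : nat) (V : Omega -> valuation k) : set (set Omega) :=
  [set Aev | exists B : {set 'I_k} -> set R, (forall S, measurable (B S)) /\
     Aev = [set om | forall S, B S (V om S)]].

Definition events_bool (o : Omega -> bool) : set (set Omega) :=
  [set Aev | exists B : set bool, Aev = o @^-1` B].

Definition Exp (f : Omega -> R) : \bar R := (\int[P]_om (f om)%:E)%E.

Definition Prob (Aev : set Omega) : R := fine (P Aev).

End Prob.

Section Mech.
Variables (n k : nat).

Definition Lambda1 (L : {set 'I_k}) (p : 'I_k -> R) (offered : 'I_k -> bool)
  (ws : 'I_k -> R) : {set 'I_k} :=
  [set j | [&& j \in L, offered j & ws j <= p j]].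

Definition remaining (pick : 'I_n -> {set 'I_k} -> {set 'I_k})
  (Lam1 : {set 'I_k}) : {set 'I_k} :=
  foldl (fun Lam i => Lam :\: pick i Lam) Lam1 (enum 'I_n).

Definition stays (pick : 'I_n -> {set 'I_k} -> {set 'I_k})
  (Lam1 : {set 'I_k}) (j : 'I_k) : bool :=
  (j \notin Lam1) || (j \in remaining pick Lam1).

Definition utility (v : valuation k) (p : 'I_k -> R) (B : {set 'I_k}) : R :=
  v B - \sum_(j in B) p j.

Definition utility_maximizing (v : valuation k) (p : 'I_k -> R)
  (Lam B : {set 'I_k}) :=
  B \subset Lam /\ forall B' : {set 'I_k}, B' \subset Lam -> utility v p B' <= utility v p B.

End Mech.

End Market.

(* Main.v *)
Require Import Defs.
From HB Require Import structures.
From mathcomp Require Import all_boot all_order all_algebra.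
From mathcomp Require Import all_classical all_reals all_analysis.
From mathcomp Require Import lra.
Import Order.TTheory GRing.Theory Num.Theory.
Local Open Scope ring_scope.

Section helpers.
Local Open Scope classical_set_scope.

Lemma nm_le_integral (R : realType) d (T : measurableType d) (mu : {measure set T -> \bar R})
  (f g : T -> \bar R) : (forall x, (0 <= f x)%E) -> (forall x, (f x <= g x)%E) ->
  (\int[mu]_x f x <= \int[mu]_x g x)%E.
Proof.
move=> f0 fg.
have g0 x : (0 <= g x)%E by apply: le_trans (f0 x) (fg x).
rewrite !ge0_integralTE //; apply: le_ereal_sup => _ [h hf <-].
by exists h => // x; apply: le_trans (hf x) (fg x).
Qed.

Lemma ccdf_bound (R : realType) d (T : measurableType d) (P : probability T R)
  (f g : T -> R) : measurable_fun setT f -> measurable_fun setT g ->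
  (forall x, 0 <= f x) -> (forall x, 0 <= g x) ->
  (forall r, 0 <= r -> (P (f @^-1` `]r, +oo[) <= 2%:E * P (g @^-1` `]r, +oo[))%E) ->
  (\int[P]_x (f x)%:E <= 2%:E * \int[P]_x (g x)%:E)%E.
Proof.
move=> mf mg f0 g0 H.
pose X : {RV P >-> R} := mfun_Sub (mem_set mf).
pose Y : {RV P >-> R} := mfun_Sub (mem_set mg).
have -> : (\int[P]_x (f x)%:E = 'E_P[X])%E by rewrite expectation_def.
have -> : (\int[P]_x (g x)%:E = 'E_P[Y])%E by rewrite expectation_def.
rewrite !ge0_expectation_ccdf //.
rewrite -ge0_integralZl //.
apply: ge0_le_integral => //.
- by apply: measurable_funS (ccdf_measurable X).
- apply: emeasurable_funM => //; apply: measurable_funS (ccdf_measurable Y) => //.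
- move=> r; rewrite /= in_itv /= andbT => r0.
  exact: H.
- by apply: measurable_funS (ccdf_measurable Y).
Qed.

Lemma mpre d (T : measurableType d) (R : realType) (W : T -> R) (S : set R) :
  measurable_fun setT W -> measurable S -> measurable (W @^-1` S).
Proof. by move=> mW mS; rewrite -[_ @^-1` _]setTI; apply: mW. Qed.

Lemma PE d (T : measurableType d) (R : realType) (P : probability T R) (A : set T) :
  measurable A -> P A = (fine (P A))%:E.
Proof. by move=> mA; rewrite fineK // fin_num_measure. Qed.

Arguments PE {d T R} P {A}.

Lemma Pfine_ge0 d (T : measurableType d) (R : realType) (P : probability T R) (A : set T) :
  0 <= fine (P A).
Proof. by apply: fine_ge0; apply: measure_ge0. Qed.

Lemma Pfine_le1 d (T : measurableType d) (R : realType) (P : probability T R) (A : set T) :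
  measurable A -> fine (P A) <= 1.
Proof. by move=> mA; rewrite -lee_fin -(PE P) // probability_le1. Qed.

Lemma PfineU d (T : measurableType d) (R : realType) (P : probability T R) (A B : set T) :
  measurable A -> measurable B -> A `&` B = set0 ->
  fine (P (A `|` B)) = fine (P A) + fine (P B).
Proof.
move=> mA mB AB; apply/EFin_inj; rewrite -(PE P); last exact: measurableU.
by rewrite measureU // EFinD -!(PE P).
Qed.

Arguments PfineU {d T R} P {A B}.
Arguments Pfine_le1 {d T R} P {A}.
Arguments Pfine_ge0 {d T R} P A.

Lemma half_bound d (T : measurableType d) (R : realType) (P : probability T R)
  (W : T -> R) (Ob : T -> bool) (p : R) :
  measurable_fun setT W -> measurable [set x | Ob x] -> (forall x, 0 <= W x) ->
  (forall S, measurable S -> P ([set x | Ob x] `&` W @^-1` S) =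
       (fine (P [set x | Ob x]) * fine (P (W @^-1` S)))%:E) ->
  P ([set x | Ob x] `&` [set x | W x <= p]) = (2^-1)%:E ->
  (\int[P]_x (W x)%:E <= 2%:E * \int[P]_x (W x * (~~ (Ob x && (W x <= p)))%:R)%:E)%E.
Proof.
move=> mW mO W0 ind half.
set O := [set x | Ob x].
have mB : measurable (W @^-1` `]-oo, p]) by apply: mpre.
have BE : [set x | W x <= p] = W @^-1` `]-oo, p].
  by apply/seteqP; split => x /=; rewrite in_itv.
have mg : measurable_fun setT (fun x => W x * (~~ (Ob x && (W x <= p)))%:R).
  apply: measurable_realfun.measurable_funM => //.
  have -> : (fun x => (~~ (Ob x && (W x <= p)))%:R) =
      \1_(~` (O `&` W @^-1` `]-oo, p])) :> (T -> R).
    apply/funext => x; rewrite indicE; congr (_%:R).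
    rewrite in_setC in_setI.
    have -> : (x \in O) = Ob x by apply/idP/idP => [/set_mem|/mem_set].
    have -> : (x \in W @^-1` `]-oo, p]) = (W x <= p).
      apply/idP/idP => [/set_mem /=|H]; first by rewrite in_itv.
      by apply: mem_set => /=; rewrite in_itv.
    by [].
  by apply: measurable_realfun.measurable_indic; apply: measurableC; apply: measurableI.
apply: ccdf_bound => //.
  by move=> x; apply: mulr_ge0.
move=> r r0.
set E := W @^-1` `]r, +oo[.
have mE : measurable E by apply: mpre.
have -> : (fun x => W x * (~~ (Ob x && (W x <= p)))%:R) @^-1` `]r, +oo[ =
    E `\` (O `&` W @^-1` `]-oo, p]).
  rewrite /E /O; apply/seteqP; split => x /=; rewrite !in_itv /= !andbT.
  - case: (Ob x); case: (W x <= p) => /=; rewrite ?mulr0 ?mulr1 => H.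
    + by move: (lt_le_trans H r0); rewrite ltxx.
    + by split => // -[].
    + by split => // -[].
    + by split => // -[].
  - case=> H; case: (Ob x); case: (W x <= p) => /=; rewrite ?mulr0 ?mulr1 //.
    by case; split.
have mI : measurable (W @^-1` `]r, p]) by apply: mpre.
have mL : measurable (W @^-1` `]-oo, r]) by apply: mpre.
set C := O `&` W @^-1` `]-oo, p].
have mC : measurable C by apply: measurableI.
have mEC : measurable (E `\` C) by apply: measurableD.
have ECE : E `&` C = [set x | Ob x] `&` W @^-1` `]r, p].
  rewrite /E /C /O; apply/seteqP; split => x /=; rewrite !in_itv /= ?andbT.
  - by move=> [H1 [H2 H3]]; split => //; rewrite H1.
  - by move=> [H1 /andP[H2 H3]]; split => //.
have sp : fine (P E) = fine (P (E `\` C)) + fine (P (E `&` C)).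
  rewrite -PfineU //.
  - congr (fine (P _)); apply/seteqP; split => z /=.
    + by move=> Ez; have [Cz|nCz] := pselect (C z); [right|left].
    + by case=> -[].
  - exact: measurableI.
  - by apply/seteqP; split => z //= [[_ nC] [_ C1]].
rewrite (PE P mEC) (PE P mE) lee_fin.
move: sp; rewrite ECE ind // => /= sp.
have hhalf : fine (P [set x | Ob x]) * fine (P (W @^-1` `]-oo, p])) = 2^-1.
  by apply: EFin_inj; rewrite -ind // -BE; exact: half.
set a := fine (P [set x | Ob x]); set x := fine (P E).
set y := fine (P (W @^-1` `]r, p])); set pi := fine (P (W @^-1` `]-oo, p])).
have a0 : 0 <= a by apply: Pfine_ge0.
have x0 : 0 <= x by apply: Pfine_ge0.
have x1 : x <= 1 by apply: Pfine_le1.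
have pi1 : pi <= 1 by apply: Pfine_le1.
have yx : y <= pi * x.
  have [rp|pr] := ltP r p.
  - have e1 : pi = y + fine (P (W @^-1` `]-oo, r])).
      rewrite /pi /y -PfineU //; last first.
        apply/seteqP; split => z //= []; rewrite !in_itv /= => /andP[H1 H2] H3.
        by move: (lt_le_trans H1 H3); rewrite ltxx.
      congr (fine (P _)); apply/seteqP; split => z /=; rewrite !in_itv /=.
      + by move=> H; case: (ltP r (W z)) => H'; [left; apply/andP; split | right].
      + by case=> [/andP[_ ->]|H] //; apply: le_trans H (ltW rp).
    have e2 : 1 = x + fine (P (W @^-1` `]-oo, r])).
      rewrite /x -PfineU //; last first.
        apply/seteqP; split => z //= []; rewrite !in_itv /= ?andbT => H1 H3.
        by move: H1; rewrite /E /= in_itv /= andbT => H1; move: (lt_le_trans H1 H3); rewrite ltxx.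
      have -> : E `|` W @^-1` `]-oo, r] = setT.
        apply/seteqP; split => z //= _; rewrite /E /= !in_itv /= ?andbT.
        by case: (ltP r (W z)) => H'; [left | right].
      by rewrite probability_setT.
    nra.
  - have -> : y = 0.
      rewrite /y; have -> : W @^-1` `]r, p] = set0.
        apply/seteqP; split => z //=; rewrite in_itv /= => /andP[H1 H2].
        by move: (lt_le_trans H1 (le_trans H2 pr)); rewrite ltxx.
      by rewrite measure0.
    by apply: mulr_ge0 => //; apply: Pfine_ge0.
have h1 : 0 <= a * (pi * x - y) by apply: mulr_ge0 => //; rewrite subr_ge0.
have h2 : a * (pi * x) = x / 2 by rewrite mulrA hhalf mulrC.
move: sp; rewrite -/a -/x -/y => sp. nra.
Qed.

Lemma mg_meas d (T : measurableType d) (R : realType)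
  (W : T -> R) (Ob : T -> bool) (p : R) :
  measurable_fun setT W -> measurable [set x | Ob x] ->
  measurable_fun setT (fun x => W x * (~~ (Ob x && (W x <= p)))%:R).
Proof.
move=> mW mO.
set O := [set x | Ob x].
have mB : measurable (W @^-1` `]-oo, p]) by apply: mpre.
apply: measurable_realfun.measurable_funM => //.
have -> : (fun x => (~~ (Ob x && (W x <= p)))%:R) =
    \1_(~` (O `&` W @^-1` `]-oo, p])) :> (T -> R).
  apply/funext => x; rewrite indicE; congr (_%:R).
  rewrite in_setC in_setI.
  have -> : (x \in O) = Ob x by apply/idP/idP => [/set_mem|/mem_set].
  have -> : (x \in W @^-1` `]-oo, p]) = (W x <= p).
    apply/idP/idP => [/set_mem /=|H]; first by rewrite in_itv.
    by apply: mem_set => /=; rewrite in_itv.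
  by [].
by apply: measurable_realfun.measurable_indic; apply: measurableC; apply: measurableI.
Qed.

End helpers.

Theorem lemma1 (R : realType) (d : measure_display) (Omega : measurableType d)
  (P : probability Omega R) (n k : nat)
  (v : 'I_n -> Omega -> valuation R k)            (* buyers' random valuations *)
  (w : 'I_k -> Omega -> R)                  (* sellers' random values *)
  (a : valuation R k -> {set 'I_k} -> 'I_k -> R)  (* a(v,T,.) as item weights *)
  (A : ('I_n -> valuation R k) -> alloc n k)      (* the allocation algorithm *)
  (offer : 'I_k -> Omega -> bool)           (* mechanism's offer coins *)
  (pick : 'I_n -> Omega -> {set 'I_k} -> {set 'I_k}) (* buyers' choices *)
  (opt : Omega -> alloc n k)                (* welfare-maximizing allocation *)
  :
  let ESW := fun j => Exp P (fun om => SWB a A (fun i => v i om) j) in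
  let Ew := fun j => Exp P (w j) in
  let L := [set j : 'I_k | (4%:E * Ew j <= ESW j)%E] in
  let p := fun j => fine (ESW j) / 2 in
  let q := fun j => (2 * Prob P [set om | w j om <= p j]%classic)^-1 in
  (forall i S, measurable_fun setT (fun om => v i om S)) ->
  (forall j, measurable_fun setT (w j)) ->
  (forall j, measurable [set om | offer j om]%classic) ->
  (forall j om, 0 <= w j om) ->
  (forall i om, [/\ XOS (v i om), monotone_val (v i om) & normalized_val (v i om)]) ->
  (forall i om T, [/\ (forall j, 0 <= a (v i om) T j),
                     addfun (a (v i om) T) T = v i om T &
                     forall S, addfun (a (v i om) T) S <= v i om S]) ->
  mutually_independent P (fun t : 'I_n + 'I_k + 'I_k =>
    match t with
    | inl (inl i) => events_val (v i)
    | inl (inr j) => events_rv (w j)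
    | inr j => events_bool (offer j)
    end) ->
  (forall j, j \in L -> ESW j \is a fin_num) ->
  (forall j, j \in L -> P [set om | offer j om]%classic = (q j)%:E) ->
  (forall i om Lam, utility_maximizing (v i om) p Lam (pick i om Lam)) ->
  (forall om X, welfare (fun i => v i om) (fun j => w j om) X
                <= welfare (fun i => v i om) (fun j => w j om) (opt om)) ->
  (* hypothesis: every seller in L receives and accepts an offer w.p. exactly 1/2 *)
  (forall j, j \in L ->
     P ([set om | offer j om] `&` [set om | w j om <= p j])%classic = (2^-1)%:E) ->
  let ALG_S := Exp P (fun om => \sum_(j < k) w j om *
        (stays (fun i => pick i om) (Lambda1 L p (fun j => offer j om) (fun j => w j om)) j)%:R) in
  let OPT_S := Exp P (fun om => \sum_(j < k) w j om * (opt om j == None)%:R) in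
  ((\sum_(j < k) Ew j <= 2%:E * ALG_S)%E /\ (OPT_S <= \sum_(j < k) Ew j)%E).
Proof.
move=> ESW Ew L p q mv mw mO w0 xos aH indep finL Poffer util optH half ALG_S OPT_S.
have Ew0 j : (0 <= Ew j)%E.
  by apply: integral_ge0 => om _; rewrite lee_fin.
split; last first.
  rewrite /OPT_S /Exp.
  apply: (@le_trans _ _ (\int[P]_om (\sum_(j < k) w j om)%:E)%E).
    apply: nm_le_integral => om.
      by rewrite lee_fin; apply: sumr_ge0 => j _; apply: mulr_ge0.
    rewrite lee_fin; apply: ler_sum => j _.
    by case: (opt om j == None); rewrite ?mulr1 ?mulr0.
  under eq_integral => om _ do rewrite -sumEFin.
  rewrite ge0_integral_sum //.
  by move=> j; apply/measurable_realfun.measurable_EFinP.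
  by move=> j om _; rewrite lee_fin.
have indepj j (S : set R) : measurable S ->
    P ([set om | offer j om]%classic `&` w j @^-1` S)%classic =
    (fine (P [set om | offer j om]%classic) * fine (P (w j @^-1` S)%classic))%:E.
  move=> mS.
  pose Aev (t : 'I_n + 'I_k + 'I_k) : set Omega :=
    match t with
    | inl (inl _) => setT
    | inl (inr j') => if j' == j then (w j @^-1` S)%classic else setT
    | inr j' => if j' == j then [set om | offer j om]%classic else setT
    end.
  have hA : forall t, (match t with
    | inl (inl i) => events_val (v i)
    | inl (inr j) => events_rv (w j)
    | inr j => events_bool (offer j)
    end) (Aev t).
    case=> [[i|j']|j'] /=.
    - exists (fun _ => setT); split => //.
      by apply/seteqP; split => om //=.
    - case: eqP => [->|_].
      + by exists S.
      + by exists setT; split => //; rewrite preimage_setT.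
    - case: eqP => [->|_].
      + exists [set true]%classic; apply/seteqP; split => om //=.
      + by exists [set: bool]%classic; rewrite preimage_setT.
  have := indep Aev hA.
  have -> : (\bigcap_(t in [set: 'I_n + 'I_k + 'I_k]) Aev t)%classic =
      ([set om | offer j om] `&` w j @^-1` S)%classic.
    apply/seteqP; split => om /=.
    - move=> H; split.
      + by have := H (inr j) I; rewrite /= eqxx.
      + by have := H (inl (inr j)) I; rewrite /= eqxx.
    - case=> Ho Hs; case=> [[i|j']|j'] _ //=; by case: eqP => // ->.
  move=> ->; congr (_%:E).
  rewrite (bigD1 (inr j)) //= (bigD1 (inl (inr j))) //= !eqxx big1 ?mulr1 //.
  move=> t /andP[t1 t2].
  have -> : Aev t = setT.
    move: t1 t2; case: t => [[i|j']|j'] //= t1 t2.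
    - by case: eqP => // e; move: t2; rewrite e eqxx.
    - by case: eqP => // e; move: t1; rewrite e eqxx.
  by rewrite probability_setT.
set g := fun j om => w j om *
  (j \notin Lambda1 L p (fun j => offer j om) (fun j => w j om))%:R.
have gL j : j \in L -> g j = (fun om => w j om * (~~ (offer j om && (w j om <= p j)))%:R).
  by move=> jL; apply/funext => om; rewrite /g /Lambda1 inE jL.
have gNL j : j \notin L -> g j = w j.
  by move=> jL; apply/funext => om; rewrite /g /Lambda1 inE (negbTE jL) mulr1.
have mg j : measurable_fun setT (g j).
  case jL: (j \in L).
  - by rewrite gL //; apply: mg_meas.
  - by rewrite gNL ?jL //.
have g0 j om : 0 <= g j om by apply: mulr_ge0.
have step j : (Ew j <= 2%:E * Exp P (g j))%E.
  case jL: (j \in L).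
  - rewrite gL //; apply: half_bound => //.
    + by move=> S mS; apply: indepj.
    + by apply: half.
  - rewrite gNL ?jL //; apply: lee_pemull => //.
    by rewrite lee_fin ler1n.
apply: (@le_trans _ _ (\sum_(j < k) 2%:E * Exp P (g j))%E).
  by apply: lee_sum => j _; exact: step j.
rewrite -ge0_sume_distrr; last by move=> j _; apply: integral_ge0 => om _; rewrite lee_fin.
apply: lee_wpmul2l => //.
rewrite /ALG_S /Exp -ge0_integral_sum //; first last.
- by move=> j om _; rewrite lee_fin.
- by move=> j; apply/measurable_realfun.measurable_EFinP.
apply: nm_le_integral => om.
  by apply: sume_ge0 => j _; rewrite lee_fin.
rewrite sumEFin lee_fin; apply: ler_sum => j _.
rewrite /g /stays; case: (j \in Lambda1 _ _ _ _) => /=; rewrite ?mulr0 ?mulr1 //.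
by apply: mulr_ge0 => //.
Qed.
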